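(* Let $U$ be a finite nonempty set, $(T,I,N)$ a residual triplet, $\widetilde{R}$ a $T$-preorder relation on $U$, $A$ a fuzzy set on $U$, and $L:\mathbb{R}\times\mathbb{R}\to\mathbb{R}^+$ a loss function of $\lor$-type. Let $\hat{A}:U\to[0,1]$ be an optimal solution of the problem $$\text{minimize }\sum_{u\in U}L(A(u),\hat{A}(u))\quad\text{subject to } T(\widetilde{R}(u,v),\hat{A}(v))\le\hat{A}(u)\ (u,v\in U),\quad 0\le\hat{A}(u)\le1\ (u\in U).$$ Then for every $u\in U$: if $\hat{A}(u)>A(u)$, then $\hat{A}(u)=\max\{T(\widetilde{R}(u,v),\hat{A}(v)); v\in U, v\ne u\}$; and if $\hat{A}(u)<A(u)$, then $\hat{A}(u)=\min\{I(\widetilde{R}(v,u),\hat{A}(v)); v\in U, v\ne u\}$.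
   Context: A residual triplet $(T,I,N)$ consists of a left-continuous $t$-norm $T$, its residual implicator $I(x,y)=\sup\{\beta\in[0,1]: T(x,\beta)\le y\}$ and $N(x)=I(x,0)$. $\widetilde{R}:U\times U\to[0,1]$ is a $T$-preorder if reflexive and $T$-transitive ($T(\widetilde{R}(u,v),\widetilde{R}(v,w))\le\widetilde{R}(u,w)$). A fuzzy set on $U$ is a map $U\to[0,1]$. A loss function $L$ is of $\lor$-type if for every real $a$: $L(a,a)=0$; the functions $x\mapsto L(x,a)$ and $x\mapsto L(a,x)$ are increasing for $x>a$; and these functions are decreasing for $x<a$. *)

(* Defs.v *)
From HB Require Import structures.
From mathcomp Require Import all_boot all_order all_algebra.
From mathcomp Require Import reals.
Set Implicit Arguments. Unset Strict Implicit. Unset Printing Implicit Defensive.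
Import Order.TTheory GRing.Theory Num.Theory.
Local Open Scope ring_scope.

Section Defs.
Variable R : realType.

Definition in01 (x : R) := 0 <= x <= 1.

Definition tnorm (T : R -> R -> R) : Prop :=
  [/\ (forall x y, in01 x -> in01 y -> in01 (T x y)),
      (forall x y, in01 x -> in01 y -> T x y = T y x),
      (forall x y z, in01 x -> in01 y -> in01 z -> T x (T y z) = T (T x y) z),
      (forall x x' y y', in01 x -> in01 x' -> in01 y -> in01 y' ->
          x <= x' -> y <= y' -> T x y <= T x' y') &
      (forall x, in01 x -> T x 1 = x)].

(* left-continuity (in the first argument; by commutativity in both). *)
Definition left_continuous_tnorm (T : R -> R -> R) : Prop :=
  tnorm T /\
  forall x y, 0 < x <= 1 -> in01 y -> forall eps, 0 < eps ->
    exists2 delta, 0 < delta &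
      forall z, 0 <= z -> x - delta < z <= x -> `|T z y - T x y| < eps.

(* I(x,y) = sup { b in [0,1] : T(x,b) <= y } for x, y in [0,1]. *)
Definition residual_implicator (T I : R -> R -> R) : Prop :=
  forall x y, in01 x -> in01 y ->
    (forall b, in01 b -> T x b <= y -> b <= I x y) /\
    (forall c, (forall b, in01 b -> T x b <= y -> b <= c) -> I x y <= c).

Definition residual_triplet (T I : R -> R -> R) (N : R -> R) : Prop :=
  [/\ left_continuous_tnorm T, residual_implicator T I &
      forall x, in01 x -> N x = I x 0].

Definition fuzzy_set (U : Type) (A : U -> R) := forall u, in01 (A u).

Definition T_preorder (U : Type) (T : R -> R -> R) (Rt : U -> U -> R) : Prop :=
  [/\ (forall u v, in01 (Rt u v)),
      (forall u, Rt u u = 1) &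
      (forall u v w, T (Rt u v) (Rt v w) <= Rt u w)].

(* Loss function of \/-type with values in R^+ (nonnegative);
   "increasing"/"decreasing" read strictly. *)
Definition vee_type_loss (L : R -> R -> R) : Prop :=
  [/\ (forall x y, 0 <= L x y),
      (forall a, L a a = 0),
      (forall a x y, a < x -> x < y -> L x a < L y a /\ L a x < L a y) &
      (forall a x y, x < y -> y < a -> L y a < L x a /\ L a y < L a x)].

Definition feasible (U : Type) (T : R -> R -> R) (Rt : U -> U -> R) (B : U -> R) :=
  (forall u v, T (Rt u v) (B v) <= B u) /\ (forall u, 0 <= B u <= 1).

Definition optimal_solution (U : finType) (T L : R -> R -> R) (Rt : U -> U -> R)
    (A Ah : U -> R) : Prop :=
  feasible T Rt Ah /\
  forall B, feasible T Rt B ->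
    \sum_(u : U) L (A u) (Ah u) <= \sum_(u : U) L (A u) (B u).

End Defs.

(* Main.v *)
Require Import Defs.
From HB Require Import structures.
From mathcomp Require Import all_boot all_order all_algebra.
From mathcomp Require Import reals.
From mathcomp Require Import lra.
Import Order.TTheory GRing.Theory Num.Theory.
Local Open Scope ring_scope.

Section Aux.
Variable R : realType.

Lemma swap_contra (U : finType) (T L : R -> R -> R) (Rt : U -> U -> R)
   (A Ah : U -> R) (u : U) (b : R) :
  optimal_solution T L Rt A Ah ->
  feasible T Rt (fun w => if w == u then b else Ah w) ->
  L (A u) b < L (A u) (Ah u) -> False.
Proof.
move=> [_ Hopt] Hf Hlt.
have := Hopt _ Hf.
rewrite (bigD1 u) //= [X in _ <= X](bigD1 u) //= eqxx.
have -> : \sum_(i | i != u) L (A i) (if i == u then b else Ah i) =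
   \sum_(i | i != u) L (A i) (Ah i) by apply: eq_bigr => i /negbTE ->.
by rewrite lerD2r leNgt Hlt.
Qed.

Lemma loss_pos (L : R -> R -> R) a y : vee_type_loss L -> a != y -> 0 < L a y.
Proof.
move=> [H0 Haa Hinc Hdec] ne.
have [lt|gt|e] := ltgtP a y.
- have := Hinc a ((a + y) / 2) y.
  have h1 : a < (a + y) / 2 by rewrite ltr_pdivlMr // mulrDr mulr1 ltrD2l.
  have h2 : (a + y) / 2 < y by rewrite ltr_pdivrMr // mulrDr mulr1 ltrD2r.
  move=> /(_ h1 h2) [_ h]; exact: le_lt_trans (H0 _ _) h.
- have := Hdec a y ((y + a) / 2).
  have h1 : y < (y + a) / 2 by rewrite ltr_pdivlMr // mulrDr mulr1 ltrD2l.
  have h2 : (y + a) / 2 < a by rewrite ltr_pdivrMr // mulrDr mulr1 ltrD2r.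
  move=> /(_ h1 h2) [_ h]; exact: le_lt_trans (H0 _ _) h.
- by rewrite e eqxx in ne.
Qed.

Lemma loss_lt (L : R -> R -> R) a x y : vee_type_loss L ->
  ((a <= x /\ x < y) \/ (y < x /\ x <= a)) -> L a x < L a y.
Proof.
move=> HL; have HL' := HL; case: HL' => [H0 Haa Hinc Hdec].
case=> [[h1 h2]|[h1 h2]].
- have [e|lt] := eqVneq a x.
    rewrite -e Haa; apply: loss_pos => //; rewrite -e in h2; by rewrite (lt_eqF h2).
  have lt' : a < x by rewrite lt_neqAle lt h1.
  by case: (Hinc a x y lt' h2).
- have [e|lt] := eqVneq a x.
    rewrite -e Haa; apply: loss_pos => //; rewrite -e in h1; by rewrite (gt_eqF h1).
  have lt' : x < a by rewrite lt_neqAle eq_sym lt h2.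
  by case: (Hdec a y x h1 lt').
Qed.

Lemma resid_le (T I : R -> R -> R) (N : R -> R) x y b :
  residual_triplet T I N -> in01 x -> in01 y -> in01 b -> 0 < b ->
  b <= I x y -> T x b <= y.
Proof.
move=> [[[Hin Hcom Hass Hmono H1] Hlc] Hres _] hx hy hb bpos bI.
have step : forall b', in01 b' -> b' < b -> T x b' <= y.
  move=> b' hb' lt; rewrite leNgt; apply/negP => Hgt.
  have : I x y <= b'.
    apply: (proj2 (Hres x y hx hy)) => c hc Tc.
    rewrite leNgt; apply/negP => cgt.
    have : T x b' <= T x c.
      by apply: Hmono => //; exact: ltW.
    move=> h; have := lt_le_trans Hgt (le_trans h Tc); by rewrite ltxx.
  move=> h; have := le_lt_trans (le_trans bI h) lt; by rewrite ltxx.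
rewrite leNgt; apply/negP => Hgt.
have hb1 : 0 < b <= 1 by rewrite bpos; case/andP: hb.
have eps0 : 0 < T x b - y by rewrite subr_gt0.
have [d dpos Hd] := Hlc b x hb1 hx (T x b - y) eps0.
pose z := Num.max 0 (b - d / 2).
have z0 : 0 <= z by rewrite le_max lexx.
have zlt : z < b.
  rewrite /z gt_max bpos /=; lra.
have zgt : b - d < z.
  rewrite /z lt_max; apply/orP; right; lra.
have := Hd z z0; rewrite zgt (ltW zlt) => /(_ isT).
have hz : in01 z by rewrite /in01 z0 /=; apply: le_trans (ltW zlt) _; case/andP: hb.
rewrite Hcom // [T b x]Hcom //.
have := step z hz zlt => Tz.
rewrite ltr_norml => /andP [h _].
lra.
Qed.

End Aux.

Theorem lemma1 (R : realType) (U : finType) (u0 : U)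
    (T I : R -> R -> R) (N : R -> R) (Rt : U -> U -> R) (A : U -> R)
    (L : R -> R -> R) (Ah : U -> R) :
  residual_triplet T I N ->
  T_preorder T Rt ->
  fuzzy_set A ->
  vee_type_loss L ->
  optimal_solution T L Rt A Ah ->
  forall u : U,
    (A u < Ah u ->
       Ah u = \big[Num.max/0]_(v | v != u) T (Rt u v) (Ah v)) /\
    (Ah u < A u ->
       Ah u = \big[Num.min/1]_(v | v != u) I (Rt v u) (Ah v)).
Proof.
move=> Htr Hpre HA HL Hopt u.
have Hopt' := Hopt; case: Hopt' => [[Hf1 Hf2] _].
have Htr' := Htr; case: Htr' => [[[Hin Hcom Hass Hmono H1] Hlc] Hres HN].
case: Hpre => [HRin HRr HRt].
have i01 : in01 (1 : R) by rewrite /in01 ler01 lexx.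
have T1 : forall x, in01 x -> T 1 x = x by move=> x hx; rewrite Hcom // H1.
have hA := HA u; case/andP: (hA) => A0 A1.
case/andP: (Hf2 u) => Ah0 Ah1.
split.
- move=> lt.
  set M := \big[Num.max/0]_(v | v != u) T (Rt u v) (Ah v).
  have M0 : 0 <= M.
    rewrite /M; apply: (big_ind (fun x => 0 <= x)) => //.
    all: try (by move=> x y hx hy; rewrite le_max hx).
    all: try (by move=> v _; case/andP: (Hin _ _ (HRin u v) (Hf2 v))).
  have MleA : M <= Ah u.
    rewrite /M; apply: (big_ind (fun x => x <= Ah u)) => //.
    all: try (by move=> x y hx hy; rewrite ge_max hx hy).
    all: try (by move=> v _; apply: Hf1).
  have ub : forall v, v != u -> T (Rt u v) (Ah v) <= M.
    by move=> v vne; rewrite /M (bigD1 v) //= le_max lexx.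
  apply: le_anti; rewrite MleA andbT leNgt; apply/negP => Mlt.
  set b := Num.max M (A u).
  have hb : in01 b by rewrite /in01 le_max M0 /= ge_max A1 (le_trans MleA Ah1).
  exfalso; apply: (@swap_contra R U T L Rt A Ah u b Hopt).
  + split.
    * move=> w v /=; case: (eqVneq w u) => [->|wne]; case: (eqVneq v u) => [->|vne].
      -- by rewrite HRr T1.
      -- by apply: le_trans (ub v vne) _; rewrite le_max lexx.
      -- apply: le_trans (Hf1 w u); apply: (Hmono _ _ _ _ (HRin w u) (HRin w u) hb (Hf2 u) (lexx _)).
         by rewrite ge_max (ltW Mlt) (ltW lt).
      -- exact: Hf1.
    * by move=> w /=; case: ifP => _ //; case/andP: hb => -> ->.
  + apply: loss_lt => //; left; split; first by rewrite le_max lexx orbT.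
    by rewrite gt_max Mlt lt.
- move=> lt.
  set m := \big[Num.min/1]_(v | v != u) I (Rt v u) (Ah v).
  have Ahm : Ah u <= m.
    rewrite /m; apply: (big_ind (fun x => Ah u <= x)) => //.
    all: try (by move=> x y hx hy; rewrite le_min hx hy).
    all: try (by move=> v _; apply: (proj1 (Hres _ _ (HRin v u) (Hf2 v))) (Hf2 u) (Hf1 v u)).
  have m1 : m <= 1.
    rewrite /m; apply: (big_ind (fun x => x <= 1)) => //.
    all: try (by move=> x y hx hy; rewrite ge_min hx).
    + move=> v _; apply: (proj2 (Hres _ _ (HRin v u) (Hf2 v))) => c.
      by case/andP.
  have lb : forall v, v != u -> m <= I (Rt v u) (Ah v).
    by move=> v vne; rewrite /m (bigD1 v) //= ge_min lexx.
  apply: le_anti; rewrite Ahm /= leNgt; apply/negP => mgt.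
  set b := Num.min m (A u).
  have Ahb : Ah u < b by rewrite lt_min mgt lt.
  have bpos : 0 < b by apply: le_lt_trans Ahb.
  have hb : in01 b by rewrite /in01 (ltW bpos) ge_min m1.
  exfalso; apply: (@swap_contra R U T L Rt A Ah u b Hopt).
  + split.
    * move=> w v /=; case: (eqVneq w u) => [->|wne]; case: (eqVneq v u) => [->|vne].
      -- by rewrite HRr T1.
      -- exact: le_trans (Hf1 u v) (ltW Ahb).
      -- apply: (@resid_le R T I N (Rt w u) (Ah w) b Htr (HRin w u) (Hf2 w) hb bpos).
         by apply: le_trans (lb w wne); rewrite ge_min lexx.
      -- exact: Hf1.
    * by move=> w /=; case: ifP => _ //; case/andP: hb => -> ->.
  + apply: loss_lt => //; right; split => //.
    by rewrite ge_min lexx orbT.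
Qed.
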